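(* For every $n\geq 1$, there are at least $2^{2^n-1}$ $n$-cube unique sink orientations that have property L.
   Context: For sets $U,V$ let $U\oplus V=(U\cup V)\setminus(U\cap V)$ and $[U,W]=\{X:U\subseteq X\subseteq W\}$. An $n$-cube orientation is a directed graph $\mathcal{O}$ on vertex set $[\emptyset,[n]]$ (all subsets of $[n]=\{1,\dots,n\}$) containing, for every vertex $V$ and every $i\in[n]$, exactly one of the directed edges $(V,V\oplus\{i\})$, $(V\oplus\{i\},V)$. Its outmap is $\phi_{\mathcal{O}}(V)=\{i: (V,V\oplus\{i\})\in\mathcal{O}\}$. For a vertex $V$, the L-graph $\mathcal{L}_{\mathcal{O}}(V)$ has vertex set $[n]\setminus V$ and an arc $(i,j)$ for distinct $i,j\notin V$ whenever $j\in\phi_{\mathcal{O}}(V)\oplus\phi_{\mathcal{O}}(V\cup\{i\})$. $\mathcal{O}$ has property L if all its L-graphs are acyclic. A face is the subgraph induced by an interval $[U,W]$ of vertices; $\mathcal{O}$ is a unique sink orientation (USO) if every face has exactly one sink (vertex with no outgoing edge within the face). *)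

(* Defs.v *)
From mathcomp Require Import all_boot.
Set Implicit Arguments. Unset Strict Implicit. Unset Printing Implicit Defensive.

(* Vertices of the n-cube: subsets of [n], encoded as {set 'I_n}. *)
Notation vtx n := {set 'I_n}.

Definition symd (n : nat) (U V : vtx n) : vtx n := (U :|: V) :\: (U :&: V).

Definition digraph (n : nat) := {set (vtx n * vtx n)}.

Definition is_orientation (n : nat) (O : digraph n) : bool :=
  [forall e in O, exists i : 'I_n, e.2 == symd e.1 [set i]] &&
  [forall V : vtx n, forall i : 'I_n,
     ((V, symd V [set i]) \in O) (+) ((symd V [set i], V) \in O)].

Definition outmap (n : nat) (O : digraph n) (V : vtx n) : vtx n :=
  [set i | (V, symd V [set i]) \in O].

Definition Lgraph_arc (n : nat) (O : digraph n) (V : vtx n) : rel 'I_n :=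
  fun i j => [&& i \notin V, j \notin V, i != j &
     j \in symd (outmap O V) (outmap O (V :|: [set i]))].

Definition acyclic (T : eqType) (r : rel T) : Prop :=
  ~ exists s : seq T, s != [::] /\ cycle r s.

Definition property_L (n : nat) (O : digraph n) : Prop :=
  forall V : vtx n, acyclic (Lgraph_arc O V).

Definition in_interval (n : nat) (U W X : vtx n) : bool :=
  (U \subset X) && (X \subset W).

Definition is_face_sink (n : nat) (O : digraph n) (U W X : vtx n) : bool :=
  in_interval U W X &&
  [forall Y : vtx n, in_interval U W Y ==> ((X, Y) \notin O)].

Definition is_USO (n : nat) (O : digraph n) : Prop :=
  is_orientation O /\
  forall U W : vtx n, U \subset W ->
    #|[set X : vtx n | is_face_sink O U W X]| = 1.

(* Main.v *)
Require Import Defs.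
From mathcomp Require Import all_boot.
Set Implicit Arguments. Unset Strict Implicit. Unset Printing Implicit Defensive.

Section Constr.
Variable n : nat.

Lemma in_symd (U V : vtx n) x : (x \in symd U V) = (x \in U) (+) (x \in V).
Proof. by rewrite /symd !inE; case: (x \in U); case: (x \in V). Qed.

Lemma symd1_inj (V : vtx n) i j : symd V [set i] = symd V [set j] -> i = j.
Proof.
move/setP=> /(_ i); rewrite !in_symd !inE eqxx.
by case: (i \in V); case: eqP => //= ->.
Qed.

Definition D := {B : {set 'I_n} | B != set0}.

Definition key (V : vtx n) (i : 'I_n) : vtx n :=
  [set j in V | (j < i)%N] :|: [set i].

Definition up (f : {ffun D -> bool}) (V : vtx n) (i : 'I_n) : bool :=
  if insub (key V i) is Some d then f d else false.

Definition orient (f : {ffun D -> bool}) : digraph n :=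
  [set e | [exists i : 'I_n, (e.2 == symd e.1 [set i]) && (up f e.1 i == (i \notin e.1))]].

Lemma up_ext f (V V' : vtx n) (i : 'I_n) :
  (forall j : 'I_n, (j < i)%N -> (j \in V) = (j \in V')) -> up f V i = up f V' i.
Proof.
move=> H; rewrite /up; congr (match insub _ with Some d => _ | None => _ end).
apply/setP=> j; rewrite !inE; case: (ltnP j i) => hj; last by rewrite !andbF.
by rewrite H.
Qed.

Lemma up_symd f (V : vtx n) (i : 'I_n) : up f (symd V [set i]) i = up f V i.
Proof.
apply: up_ext=> j hj; rewrite in_symd inE.
have -> : (j == i) = false by apply/eqP=> E; rewrite E ltnn in hj.
by rewrite addbF.
Qed.

Lemma mem_orient f (V : vtx n) (i : 'I_n) :
  ((V, symd V [set i]) \in orient f) = (up f V i == (i \notin V)).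
Proof.
rewrite inE /=; apply/existsP/idP => [[j /andP [/eqP E H]]|H].
  by move: (symd1_inj E) H => ->.
by exists i; rewrite eqxx.
Qed.

Lemma outmap_orient f (V : vtx n) :
  outmap (orient f) V = [set i | up f V i == (i \notin V)].
Proof. by apply/setP=> i; rewrite /outmap [in LHS]inE mem_orient inE. Qed.

Lemma symdK (V : vtx n) (i : 'I_n) : symd (symd V [set i]) [set i] = V.
Proof. by apply/setP=> x; rewrite !in_symd; case: (x \in V); case: (x \in _). Qed.

Lemma orient_is_orientation f : is_orientation (orient f).
Proof.
apply/andP; split.
  apply/forallP=> e; apply/implyP; rewrite inE => /existsP [i /andP [E _]].
  by apply/existsP; exists i.
apply/forallP=> V; apply/forallP=> i.
rewrite mem_orient; have := mem_orient f (symd V [set i]) i; rewrite symdK => ->; rewrite up_symd in_symd inE eqxx.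
by case: (up f V i); case: (i \in V).
Qed.

Lemma lt_cycle (r : rel 'I_n) (s : seq 'I_n) :
  (forall a b, r a b -> (a < b)%N) -> s != [::] -> cycle r s -> False.
Proof.
move=> Hr; case: s => // x s _ /= Hp.
have Hp' : path (fun a b : 'I_n => (a < b)%N) x (rcons s x) by apply: sub_path Hp.
have tr : transitive (fun a b : 'I_n => (a < b)%N) by move=> ? ? ?; apply: ltn_trans.
have := order_path_min tr Hp'.
by move/allP/(_ x); rewrite mem_rcons inE eqxx ltnn => /(_ isT).
Qed.

Lemma orient_L f : property_L (orient f).
Proof.
move=> V [s [Hs Hc]]; apply: (lt_cycle _ Hs Hc) => i j.
rewrite /Lgraph_arc => /and4P [_ hj hij].
rewrite !outmap_orient in_symd !inE.
case: (ltngtP i j) => // hji; last by move/eqP: hij; move/val_inj: hji => ->.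
rewrite (@up_ext f (V :|: [set i]) V j); last first.
  move=> k hk; rewrite !inE; case: (k \in V) => //=.
  by apply/eqP=> E; rewrite E ltnNge ltnW in hk.
by rewrite (eq_sym j i) (negbTE hij) orbF addbb.
Qed.

Section Face.
Variables (f : {ffun D -> bool}) (U W : vtx n).
Hypothesis UW : U \subset W.

Definition choose (i : 'I_n) (Y : vtx n) : bool :=
  if i \in W :\: U then up f Y i else i \in U.

Definition cond (X : vtx n) (i : 'I_n) : bool := (i \in X) == choose i X.

Lemma sinkP X : is_face_sink (orient f) U W X = [forall i, cond X i].
Proof.
rewrite /is_face_sink /in_interval.
apply/idP/forallP => [/andP [/andP [UX XW] H] i | H].
  rewrite /cond /choose; case: ifP => hi.
    move: hi; rewrite inE => /andP [hU hW].
    have Hin : in_interval U W (symd X [set i]).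
      apply/andP; split; apply/subsetP=> x hx.
        rewrite in_symd inE (subsetP UX x hx); case: (x =P i) => [E|//].
        by subst x; rewrite hx in hU.
      move: hx; rewrite in_symd inE; case: (x =P i) => [-> //|_]; rewrite addbF.
      exact: (subsetP XW).
    move/forallP: H => /(_ (symd X [set i])); move: Hin; rewrite /in_interval => -> /=; rewrite mem_orient.
    by case: (up f X i); case: (i \in X).
  move: hi; rewrite inE => /negbT; rewrite negb_and negbK => /orP [hU|hW].
    by rewrite hU (subsetP UX).
  have hU : i \notin U by apply: contra hW; apply: (subsetP UW).
  rewrite (negbTE hU); apply/eqP/negbTE; apply: contra hW; apply: (subsetP XW).
have HX i : (i \in X) = choose i X by apply/eqP/H.
have UX : U \subset X.
  by apply/subsetP=> x hx; rewrite HX /choose inE hx.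
have XW : X \subset W.
  apply/subsetP=> x; rewrite HX /choose inE.
  case: ifP => [/andP [_ ->] //| _ hx]; exact: (subsetP UW).
rewrite /in_interval UX XW /=; apply/forallP=> Y; apply/implyP=> /andP [UY YW].
rewrite inE; apply/negP=> /existsP [i /andP [/eqP EY Hu]].
move: Hu; rewrite /= in EY *; rewrite EY in UY YW.
have := HX i; rewrite /choose inE.
case: (boolP (i \in U)) => hU.
  by move: (subsetP UY i hU); rewrite in_symd inE eqxx (subsetP UX i hU).
case: (boolP (i \in W)) => hW /=.
  by move=> ->; case: (up f X i).
move=> hX; rewrite hX.
move: (contraNN (subsetP YW i) hW); rewrite in_symd inE eqxx hX //.
Qed.

Lemma cond_uniq X X' : (forall i, cond X i) -> (forall i, cond X' i) -> X = X'.
Proof.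
move=> H H'.
suff K : forall m (i : 'I_n), (i < m)%N -> (i \in X) = (i \in X').
  by apply/setP=> i; apply: (K n).
elim=> // m IH i hi.
case: (ltnP i m) => him; first exact: IH.
have E : val i = m by apply/eqP; rewrite eqn_leq him -ltnS hi.
rewrite (eqP (H i)) (eqP (H' i)) /choose; case: ifP => // _.
by apply: up_ext => j hj; apply: IH; rewrite -E.
Qed.

Fixpoint build (k : nat) : vtx n :=
  if k is k'.+1 then build k' :|: [set i : 'I_n | (val i == k') && choose i (build k')]
  else set0.

Lemma buildE k (i : 'I_n) : (i \in build k) = (i < k)%N && choose i (build i).
Proof.
elim: k => [|k IH] /=; first by rewrite inE.
rewrite !inE IH ltnS.
case: (ltngtP i k) => Hik //=; rewrite ?orbF ?andbF //.
by rewrite -Hik.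
Qed.

Lemma build_cond i : cond (build n) i.
Proof.
rewrite /cond buildE ltn_ord /= /choose; case: ifP => // _.
apply/eqP; apply: up_ext => j hj.
by rewrite !buildE hj ltn_ord.
Qed.

Lemma face_card : #|[set X : vtx n | is_face_sink (orient f) U W X]| = 1.
Proof.
rewrite (_ : [set X | _] = [set build n]) ?cards1 //.
apply/setP=> X; rewrite !inE sinkP; apply/forallP/eqP => [H|->].
  by apply: cond_uniq => // i; apply: build_cond.
exact: build_cond.
Qed.
End Face.

Lemma orient_USO f : is_USO (orient f).
Proof. split; first exact: orient_is_orientation. by move=> U W UW; apply: face_card. Qed.

Lemma orient_inj : injective orient.
Proof.
move=> f g E; apply/ffunP=> d.
have: val d != set0 := valP d.
case/set0Pn=> i0 hi0.
case: (@arg_maxnP _ i0 (fun j : 'I_n => j \in val d) (fun j : 'I_n => val j) hi0) => i /= hi Hmax.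
pose V := val d :\ i.
have K : key V i = val d.
  apply/setP=> j; rewrite !inE; case: eqP => [->|nji] /=; first by rewrite hi ?orbT.
  rewrite orbF; case: (boolP (j \in val d)) => //= hj.
  by rewrite ltn_neqAle Hmax // andbT; apply/eqP=> /val_inj.
have Up h : up h V i = h d by rewrite /up K valK.
have := mem_orient f V i; rewrite E mem_orient !Up.
by rewrite !inE eqxx /= => /eqP; case: (f d); case: (g d).
Qed.

Lemma card_D : #|{: D}| = (2 ^ n - 1)%N.
Proof.
rewrite card_sig.
have -> : #|[pred x : {set 'I_n} | x != set0]| = #|predC1 (set0 : {set 'I_n})|.
  by apply: eq_card.
rewrite cardC1 subn1; congr (_.-1).
have -> : #|{set 'I_n}| = #|powerset [set: 'I_n]|.
  rewrite -cardsT; congr (#|pred_of_set _|); apply/setP=> A; rewrite !inE; by apply/esym/subsetT.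
by rewrite card_powerset cardsT card_ord.
Qed.

End Constr.

Theorem theorem3p5 (n : nat) (hn : 1 <= n) :
  exists S : seq (digraph n),
    uniq S /\ 2 ^ (2 ^ n - 1) <= size S /\
    (forall O, O \in S -> is_USO O /\ property_L O).
Proof.
exists [seq orient f | f : {ffun D n -> bool}]; split.
  by rewrite map_inj_uniq ?enum_uniq //; apply: orient_inj.
split.
  by rewrite size_map -cardE card_ffun card_bool card_D.
move=> O /mapP [f _ ->]; split; [exact: orient_USO | exact: orient_L].
Qed.
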